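(* For every integer $N$, in $\bar k[[t]]$: $\Omega^{(N)}/\Omega^{(-1)}=-\sum_{n\ge0}\Psi_N\big(1/T^{n+1}\big)t^n$ if $N\ge0$, and $\Omega^{(N)}/\Omega^{(-1)}=\prod_{i=1}^{|N|-1}\big(t-T^{q^{-i}}\big)$ if $N<0$.
   Context: $A=\mathbb F_q[T]$, $A_+$ its monic elements, $\bar k$ the algebraic closure of $\mathbb F_q(T)$ in $\mathbb C_\infty$ (completion of an algebraic closure of $\mathbb F_q((1/T))$, $|T|_\infty=q$), $\tilde T$ a fixed $(q-1)$-th root of $-T$. $\Omega(t)=\tilde T^{-q}\prod_{i\ge1}(1-t/T^{q^i})$ (its coefficients lie in $\bar k$). For $g=\sum a_it^i$ and $n\in\mathbb Z$, $g^{(n)}=\sum a_i^{q^n}t^i$. For integers $N\ge0$, $\Psi_N(z)=\prod_{a\in A,\deg a<N}(z-a)\big/\prod_{a\in A_+,\deg a=N}a$ (so $\Psi_0(z)=z$). *)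

(* Defs.v *)
From HB Require Import structures.
From mathcomp Require Import all_boot all_order all_algebra.
From mathcomp Require Import reals.
Set Implicit Arguments. Unset Strict Implicit. Unset Printing Implicit Defensive.
Import Order.TTheory GRing.Theory Num.Theory.
Local Open Scope ring_scope.

Section Defs.
Variables (R : realType) (C : fieldType) (Fq : finFieldType).
Variable (emb : {rmorphism Fq -> C}).
Variable (abs : C -> R).

(* Formal power series in t over C: coefficient sequences nat -> C. *)
Definition fps_mul (f g : nat -> C) : nat -> C :=
  fun n => \sum_(k < n.+1) f k * g (n - k)%N.

Definition conv (s : nat -> C) (l : C) : Prop :=
  forall eps : R, 0 < eps -> exists M : nat, forall m, (M <= m)%N -> abs (s m - l) < eps.

Definition cauchy (s : nat -> C) : Prop :=
  forall eps : R, 0 < eps -> exists M : nat,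
    forall m n, (M <= m)%N -> (M <= n)%N -> abs (s m - s n) < eps.

Definition complete_nonarch_abs : Prop :=
  [/\ forall x, (abs x == 0) = (x == 0),
      forall x, 0 <= abs x,
      forall x y, abs (x * y) = abs x * abs y,
      forall x y, abs (x + y) <= Num.max (abs x) (abs y)
    & forall s, cauchy s -> exists l, conv s l].

Variable T : C.

(* image in C of a in A = F_q[T] *)
Definition evA (a : {poly Fq}) : C := (map_poly emb a).[T].

(* x lies in kbar = the algebraic closure of F_q(T) inside C *)
Definition in_kbar (x : C) : Prop :=
  exists p : {poly C}, [/\ p != 0, root p x & forall i, exists a : {poly Fq}, p`_i = evA a].

Definition kbar_dense : Prop :=
  forall (x : C) (eps : R), 0 < eps -> exists y, in_kbar y /\ abs (x - y) < eps.

Definition q := #|Fq|.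

(* Psi_N(z) = prod_{a in A, deg a < N} (z - a) / prod_{a in A_+, deg a = N} a;
   polynomials of degree < N are rVpoly v for v : 'rV[Fq]_N, monic ones of degree N
   are 'X^N + rVpoly v. *)
Definition Psi (N : nat) (z : C) : C :=
  (\prod_(v : 'rV[Fq]_N) (z - evA (rVpoly v))) /
  (\prod_(v : 'rV[Fq]_N) evA ('X^N + rVpoly v)).

(* h = g^{(n)}: coefficientwise q^n-th power (for n < 0: h_i is the (unique)
   q^{|n|}-th root of g_i, i.e. h_i^(q^|n|) = g_i). *)
Definition twist (n : int) (g h : nat -> C) : Prop :=
  match n with
  | Posz m => forall i, h i = g i ^+ (q ^ m)
  | Negz m => forall i, h i ^+ (q ^ m.+1) = g i
  end.

(* w is (the coefficient sequence of) Omega(t) = tT^{-q} prod_{i>=1} (1 - t/T^{q^i}),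
   the infinite product being the coefficientwise limit of the partial products. *)
Definition is_Omega (tT : C) (w : nat -> C) : Prop :=
  forall n, conv (fun m => ((tT ^- q) *: \prod_(1 <= i < m.+1) (1 - (T ^+ (q ^ i))^-1 *: 'X))`_n) (w n).

End Defs.

(* Main.v *)
Require Import Defs.
From HB Require Import structures.
From mathcomp Require Import all_boot all_order all_algebra all_fingroup all_solvable all_field.
From mathcomp Require Import reals.
From mathcomp Require Import ring zify.
From Stdlib Require Import FunctionalExtensionality.
Lemma funext {A B : Type} (f g : A -> B) : (forall x, f x = g x) -> f = g.
Proof. exact: functional_extensionality. Qed.
Import Order.TTheory GRing.Theory Num.Theory.
Local Open Scope ring_scope.
Set Implicit Arguments. Unset Strict Implicit. Unset Printing Implicit Defensive.

Section Frob.
Variables (C : fieldType) (Fq : finFieldType) (emb : {rmorphism Fq -> C}).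
Local Notation Q := (q Fq).

Lemma Q_gt1 : (1 < Q)%N.
Proof. exact: finNzRing_gt1. Qed.

Lemma pnat_Q : [pchar C].-nat Q.
Proof.
have [p pr_p pch] := finPcharP Fq.
have pchC : p \in [pchar C] := rmorph_pchar emb pch.
rewrite (eq_pnat _ (pcharf_eq pchC)).
have := abelem_pgroup (fin_ring_pchar_abelem pch).
by rewrite /pgroup cardsT.
Qed.

Lemma frobD L (x y : C) : (x + y) ^+ (Q ^ L) = x ^+ (Q ^ L) + y ^+ (Q ^ L).
Proof. by apply: exprDn_pchar; rewrite pnatX pnat_Q. Qed.

Lemma frobN L (x : C) : (- x) ^+ (Q ^ L) = - x ^+ (Q ^ L).
Proof. by apply/eqP; rewrite -addr_eq0 -frobD addNr expr0n expn_eq0 /=; have := Q_gt1; case: (Q). Qed.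

Lemma frob_emb L (c : Fq) : (emb c) ^+ (Q ^ L) = emb c.
Proof.
rewrite -rmorphXn; congr (emb _); elim: L => [|L IH]; first by rewrite expr1.
by rewrite expnSr exprM IH expf_card.
Qed.

Lemma frob_inj L (x y : C) : x ^+ (Q ^ L) = y ^+ (Q ^ L) -> x = y.
Proof.
move/eqP; rewrite -subr_eq0 -frobN -frobD expf_eq0 subr_eq0 => /andP[_ /eqP].
by [].
Qed.

Definition frobf (e : {rmorphism Fq -> C}) L (x : C) := x ^+ (Q ^ L).

Lemma frobf_is_nmod L : nmod_morphism (frobf emb L).
Proof.
split; first by rewrite /frobf expr0n expn_eq0; have := Q_gt1; case: (Q).
by move=> x y; rewrite /frobf frobD.
Qed.
Lemma frobf_is_monoid L : monoid_morphism (frobf emb L).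
Proof. by split; [rewrite /frobf expr1n | move=> x y; rewrite /frobf exprMn]. Qed.
HB.instance Definition _ L := GRing.isNmodMorphism.Build C C (frobf emb L) (frobf_is_nmod L).
HB.instance Definition _ L := GRing.isMonoidMorphism.Build C C (frobf emb L) (frobf_is_monoid L).

End Frob.

Section Abs.
Variables (R : realType) (C : fieldType) (abs : C -> R).
Hypothesis habs : complete_nonarch_abs abs.

Lemma abs_eq0 x : (abs x == 0) = (x == 0). Proof. by case: habs. Qed.
Lemma abs_ge0 x : 0 <= abs x. Proof. by case: habs. Qed.
Lemma absM x y : abs (x * y) = abs x * abs y. Proof. by case: habs. Qed.
Lemma abs_ultra x y : abs (x + y) <= Num.max (abs x) (abs y). Proof. by case: habs. Qed.
Lemma abs0 : abs 0 = 0. Proof. by apply/eqP; rewrite abs_eq0. Qed.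
Lemma abs1 : abs 1 = 1.
Proof.
have h := absM 1 1; rewrite mulr1 in h.
have nz : abs 1 != 0 by rewrite abs_eq0 oner_eq0.
by apply: (mulfI nz); rewrite mulr1 -h.
Qed.
Lemma absX x n : abs (x ^+ n) = abs x ^+ n.
Proof. by elim: n => [|n IH]; rewrite ?abs1 // !exprS absM IH. Qed.
Lemma absN1 : abs (-1) = 1.
Proof.
have h : abs (-1) ^+ 2 = 1 by rewrite -absX sqrrN expr1n abs1.
have /eqP := h; rewrite sqrf_eq1 => /orP[/eqP //|/eqP e].
by have := abs_ge0 (-1); rewrite e ler0N1.
Qed.
Lemma absN x : abs (- x) = abs x.
Proof. by rewrite -mulN1r absM absN1 mul1r. Qed.
Lemma abs_sub x y : abs (x - y) = abs (y - x).
Proof. by rewrite -absN opprB. Qed.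
Lemma abs_ultra_lt x y e : abs x < e -> abs y < e -> abs (x + y) < e.
Proof. by move=> hx hy; apply: le_lt_trans (abs_ultra x y) _; rewrite gt_max hx hy. Qed.
Lemma abs_ultra_le x y e : abs x <= e -> abs y <= e -> abs (x + y) <= e.
Proof. by move=> hx hy; apply: le_trans (abs_ultra x y) _; rewrite ge_max hx hy. Qed.
Lemma abs_sum_le (I : Type) (s : seq I) (P : pred I) (F : I -> C) e : 0 <= e ->
  (forall i, P i -> abs (F i) <= e) -> abs (\sum_(i <- s | P i) F i) <= e.
Proof.
move=> e0 h; elim/big_rec: _ => [|i x Pi hx]; first by rewrite abs0.
exact: abs_ultra_le (h i Pi) hx.
Qed.
Lemma abs_dom x y : abs x < abs y -> x + y != 0.
Proof.
move=> h; apply/negP => /eqP e.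
have : y = - x by apply/eqP; rewrite -addr_eq0 addrC e.
by move=> ey; move: h; rewrite ey absN ltxx.
Qed.

Lemma conv_uniq s l1 l2 : conv abs s l1 -> conv abs s l2 -> l1 = l2.
Proof.
move=> h1 h2; apply/eqP; rewrite -subr_eq0 -abs_eq0.
rewrite eq_le abs_ge0 andbT; apply/ler_addgt0Pr => e e0.
rewrite add0r.
have [M1 HM1] := h1 e e0; have [M2 HM2] := h2 e e0.
have := HM1 (maxn M1 M2) (leq_maxl _ _); have := HM2 (maxn M1 M2) (leq_maxr _ _).
move=> a b; apply/ltW.
have -> : l1 - l2 = (s (maxn M1 M2) - l2) + - (s (maxn M1 M2) - l1) by ring.
by apply: abs_ultra_lt; rewrite ?absN.
Qed.

Lemma conv_add s u l k : conv abs s l -> conv abs u k ->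
  conv abs (fun m => s m + u m) (l + k).
Proof.
move=> h1 h2 e e0; have [M1 HM1] := h1 e e0; have [M2 HM2] := h2 e e0.
exists (maxn M1 M2) => m hm.
have -> : s m + u m - (l + k) = (s m - l) + (u m - k) by rewrite opprD addrACA.
apply: abs_ultra_lt; [apply: HM1 | apply: HM2]; apply: leq_trans hm;
  [exact: leq_maxl | exact: leq_maxr].
Qed.

Lemma conv_scale c s l : conv abs s l -> conv abs (fun m => c * s m) (c * l).
Proof.
move=> h e e0.
have c0 : 0 < abs c + 1 by apply: ltr_wpDl (abs_ge0 c) ltr01.
have [M HM] := h (e / (abs c + 1)) (divr_gt0 e0 c0).
exists M => m hm; rewrite -mulrBr absM.
have := HM m hm => hl.
apply: (@le_lt_trans _ _ ((abs c + 1) * abs (s m - l))).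
  by rewrite ler_wpM2r ?abs_ge0 // lerDl ler01.
by rewrite mulrC -ltr_pdivlMr.
Qed.

Lemma conv_ext s u l : (forall m, s m = u m) -> conv abs s l -> conv abs u l.
Proof. by move=> h c e e0; have [M HM] := c e e0; exists M => m hm; rewrite -h; apply: HM. Qed.

Lemma conv_cst l : conv abs (fun _ => l) l.
Proof. by move=> e e0; exists 0%N => m _; rewrite subrr abs0. Qed.

Lemma conv_sum (I : eqType) (r : seq I) (F : I -> nat -> C) (L : I -> C) :
  (forall i, conv abs (F i) (L i)) ->
  conv abs (fun m => \sum_(i <- r) F i m) (\sum_(i <- r) L i).
Proof.
move=> h; elim: r => [|i r IH].
  by rewrite big_nil; apply: conv_ext (conv_cst 0) => m; rewrite big_nil.
by rewrite big_cons; apply: conv_ext (conv_add (h i) IH) => m; rewrite big_cons.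
Qed.

Lemma conv_shift s l K : conv abs s l -> conv abs (fun m => s (m + K)%N) l.
Proof.
move=> h e e0; have [M HM] := h e e0; exists M => m hm; apply: HM.
exact: leq_trans hm (leq_addr _ _).
Qed.

Lemma conv_unshift s l K : conv abs (fun m => s (m + K)%N) l -> conv abs s l.
Proof.
move=> h e e0; have [M HM] := h e e0; exists (M + K)%N => m hm.
have := HM (m - K)%N; rewrite subnK; last by lia.
by apply; lia.
Qed.


Lemma conv_ext_ev s u l K : (forall m, (K <= m)%N -> s m = u m) -> conv abs s l -> conv abs u l.
Proof.
move=> h c e e0; have [M HM] := c e e0; exists (maxn M K) => m hm.
rewrite -h; first by apply: HM; apply: leq_trans hm; apply: leq_maxl.
by apply: leq_trans hm; apply: leq_maxr.
Qed.

End Abs.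

Section Fps.
Variable C : fieldType.
Implicit Types f g h : nat -> C.

Lemma fps_mul_loc f g f' g' n : (forall k, (k <= n)%N -> f k = f' k /\ g k = g' k) ->
  fps_mul f g n = fps_mul f' g' n.
Proof.
move=> h; apply: eq_bigr => k _.
have hk : (k <= n)%N by rewrite -ltnS.
have hnk : (n - k <= n)%N by apply: leq_subr.
by rewrite (h k hk).1 (h _ hnk).2.
Qed.

Lemma fps_mul_poly (p r : {poly C}) : fps_mul (fun n => p`_n) (fun n => r`_n) = fun n => (p * r)`_n.
Proof. by apply: funext => n; rewrite coefM. Qed.

Definition tp n f : {poly C} := \poly_(i < n.+1) f i.

Lemma fps_mul_tp f g n k : (k <= n)%N -> fps_mul f g k = (tp n f * tp n g)`_k.
Proof.
move=> kn; transitivity (fps_mul (fun j => (tp n f)`_j) (fun j => (tp n g)`_j) k); last by rewrite coefM.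
apply: fps_mul_loc => j jk.
by rewrite !coef_poly !ifT //; apply: leq_ltn_trans (leq_trans jk kn) _.
Qed.

Lemma fps_mulA f g h : fps_mul (fps_mul f g) h = fps_mul f (fps_mul g h).
Proof.
apply: funext => n.
transitivity (((tp n f * tp n g) * tp n h)`_n).
  transitivity (fps_mul (fun j => (tp n f * tp n g)`_j) (fun j => (tp n h)`_j) n); last by rewrite coefM.
  apply: fps_mul_loc => k kn; split; first exact: fps_mul_tp.
  by rewrite coef_poly ifT.
rewrite -mulrA; symmetry.
transitivity (fps_mul (fun j => (tp n f)`_j) (fun j => (tp n g * tp n h)`_j) n); last by rewrite coefM.
apply: fps_mul_loc => k kn; split; last exact: (fps_mul_tp _ _ kn).
by rewrite coef_poly ifT.
Qed.

Lemma fps_mulZr f g c : fps_mul f (fun n => c * g n) = fun n => c * fps_mul f g n.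
Proof.
apply: funext => n; rewrite /fps_mul mulr_sumr; apply: eq_bigr => k _.
by rewrite mulrCA.
Qed.

Lemma fps_mul_delta g : fps_mul (fun n => (n == 0)%:R) g = g.
Proof.
apply: funext => n; rewrite /fps_mul big_ord_recl /= mul1r subn0 big1 ?addr0 //.
by move=> i _; rewrite mul0r.
Qed.

Lemma fps_mul_sumL (I : Type) (r : seq I) (F : I -> nat -> C) g :
  fps_mul (fun n => \sum_(i <- r) F i n) g = fun n => \sum_(i <- r) fps_mul (F i) g n.
Proof.
apply: funext => n; rewrite /fps_mul.
under eq_bigr do rewrite mulr_suml.
by rewrite exchange_big.
Qed.

Lemma fps_mulZl f g c : fps_mul (fun n => c * f n) g = fun n => c * fps_mul f g n.
Proof.
apply: funext => n; rewrite /fps_mul mulr_sumr; apply: eq_bigr => k _.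
by rewrite mulrA.
Qed.

Lemma fps_mul_rmorph (phi : {rmorphism C -> C}) f g n :
  phi (fps_mul f g n) = fps_mul (fun k => phi (f k)) (fun k => phi (g k)) n.
Proof. by rewrite rmorph_sum; apply: eq_bigr => k _; rewrite rmorphM. Qed.

End Fps.

Section Lagrange.
Variable C : fieldType.
Variable M : nat.
Variable y : 'I_M.+1 -> C.
Hypothesis yinj : injective y.

Definition Dj (j : 'I_M.+1) : {poly C} := \prod_(i < M.+1 | i != j) ('X - (y i)%:P).
Definition alj (j : 'I_M.+1) : C := (\prod_(i < M.+1 | i != j) (y j - y i))^-1.

Lemma size_Dj j : size (Dj j) = M.+1.
Proof.
rewrite /Dj size_prod; last by move=> i _; rewrite polyXsubC_eq0.
under eq_bigr do rewrite size_XsubC.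
rewrite sum_nat_const cardC1 card_ord /=; lia.
Qed.

Lemma lead_Dj j : lead_coef (Dj j) = 1.
Proof. exact: lead_coef_prod_XsubC. Qed.

Lemma Dj_coefM j : (Dj j)`_M = 1.
Proof. by rewrite -(lead_Dj j) lead_coefE size_Dj. Qed.

Lemma Dj_eval j l : (Dj j).[y l] = if l == j then (alj j)^-1 else 0.
Proof.
rewrite /Dj horner_prod; case: eqP => [->|/eqP ne].
  by rewrite /alj invrK; apply: eq_bigr => i _; rewrite hornerXsubC.
rewrite (bigD1 l) //= hornerXsubC subrr mul0r //.
Qed.

Lemma alj_neq0 j : alj j != 0.
Proof.
rewrite /alj invr_eq0 prodf_seq_neq0; apply/allP => i _; apply/implyP => ne.
by rewrite subr_eq0; apply/eqP => /yinj e; move: ne; rewrite e eqxx.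
Qed.

Lemma lagr_interp (p : {poly C}) : (size p <= M.+1)%N ->
  p = \sum_(j < M.+1) (p.[y j] * alj j) *: Dj j.
Proof.
move=> sp; apply/eqP; rewrite -subr_eq0; apply/eqP.
apply: (@roots_geq_poly_eq0 _ _ (map y (enum 'I_M.+1))).
- apply/allP => _ /mapP [l _ ->]; rewrite /root hornerD hornerN horner_sum.
  rewrite (bigD1 l) //= big1 ?addr0.
    by rewrite hornerZ Dj_eval eqxx mulrK ?subrr // unitfE alj_neq0.
  by move=> j ne; rewrite hornerZ Dj_eval eq_sym (negbTE ne) mulr0.
- by rewrite map_inj_uniq ?enum_uniq.
- rewrite size_map size_enum_ord.
  apply: leq_trans (size_polyD _ _) _; rewrite size_polyN geq_max sp /=.
  apply: leq_trans (size_sum _ _ _) _.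
  apply/bigmax_leqP => j _; apply: leq_trans (size_scale_leq _ _) _.
  by rewrite size_Dj.
Qed.

Lemma moment k : (k <= M)%N -> \sum_(j < M.+1) y j ^+ k * alj j = (k == M)%:R.
Proof.
move=> kM; have e := @lagr_interp ('X^k); rewrite size_polyXn in e.
have := congr1 (fun p : {poly C} => p`_M) (e kM).
rewrite /= coefXn coef_sum eq_sym => ->; apply: eq_bigr => j _.
by rewrite coefZ Dj_coefM mulr1 hornerXn.
Qed.

End Lagrange.

Section PsiSec.
Variables (R : realType) (C : fieldType) (Fq : finFieldType) (emb : {rmorphism Fq -> C}).
Variables (abs : C -> R) (T : C).
Hypothesis habs : complete_nonarch_abs abs.
Hypothesis hT : abs T = (q Fq)%:R.
Local Notation Q := (q Fq).

Lemma T_neq0 : T != 0.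
Proof.
rewrite -(abs_eq0 habs) hT pnatr_eq0; have := Q_gt1 Fq; by case: (Q).
Qed.

Lemma abs_emb c : c != 0 -> abs (emb c) = 1.
Proof.
move=> c0.
have e : c ^+ Q.-1 = 1.
  have := expf_card c; rewrite -/(q Fq) -(prednK (ltnW (Q_gt1 Fq))) exprS.
  move=> e; apply: (mulfI c0); rewrite mulr1; exact: e.
have : abs (emb c) ^+ Q.-1 = 1 by rewrite -(absX habs) -rmorphXn e rmorph1 (abs1 habs).
move/eqP; rewrite pexpr_eq1 ?(abs_ge0 habs) //; first by move/eqP.
by have := Q_gt1 Fq; case: (Q) => // -[].
Qed.

Lemma abs_emb_le c : abs (emb c) <= 1.
Proof. by case: (eqVneq c 0) => [->|c0]; rewrite ?rmorph0 ?(abs0 habs) ?ler01 ?abs_emb. Qed.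

Lemma absT_gt1 : 1 < abs T.
Proof. by rewrite hT ltr1n Q_gt1. Qed.

Lemma evA_sum (a : {poly Fq}) n : (size a <= n)%N ->
  evA emb T a = \sum_(i < n) emb a`_i * T ^+ i.
Proof.
move=> sa; rewrite /evA (horner_coef_wide _ (n:=n)); last by rewrite size_map_poly.
by apply: eq_bigr => i _; rewrite coef_map.
Qed.

Lemma evA_neq0 (a : {poly Fq}) : a != 0 -> evA emb T a != 0.
Proof.
move=> a0; rewrite (evA_sum (leqnn _)).
have sa : size a = (size a).-1.+1 by rewrite prednK // size_poly_gt0.
rewrite sa big_ord_recr /=.
apply: abs_dom; first exact: habs.
rewrite (absM habs) (absX habs) abs_emb -?lead_coefE ?lead_coef_eq0 // mul1r.
case: (size a).-1 => [|d]; first by rewrite big_ord0 (abs0 habs) expr0 ltr01.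
apply: (le_lt_trans (y := abs T ^+ d)).
  apply: (abs_sum_le habs); first by rewrite exprn_ge0 ?(abs_ge0 habs).
  move=> i _; rewrite (absM habs) (absX habs).
  rewrite -[X in _ <= X]mul1r; apply: ler_pM; rewrite ?exprn_ge0 ?(abs_ge0 habs) ?abs_emb_le //.
  by apply: ler_weXn2l; [apply: ltW; exact: absT_gt1 | rewrite -ltnS].
by rewrite exprS ltr_pMl ?absT_gt1 // exprn_gt0 // (lt_trans ltr01 absT_gt1).
Qed.

Definition yT (i : nat) : C := T ^+ (Q ^ i).

Lemma abs_yT i : abs (yT i) = (Q ^ (Q ^ i))%:R.
Proof. by rewrite /yT (absX habs) hT natrX. Qed.

Lemma yT_inj : injective yT.
Proof.
move=> i j e; have := congr1 abs e; rewrite !abs_yT => /eqP; rewrite eqr_nat => /eqP.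
by move/(expnI (Q_gt1 Fq))/(expnI (Q_gt1 Fq)).
Qed.

Lemma yT_neq0 i : yT i != 0.
Proof. by rewrite expf_neq0 // T_neq0. Qed.


Section PsiM.
Variable M : nat.
Definition yy (j : 'I_M.+1) : C := yT j.
Lemma yy_inj : injective yy.
Proof. by move=> i j /yT_inj /val_inj. Qed.

Definition Lp : {poly C} := \sum_(j < M.+1) alj yy j *: 'X^(Q ^ j).

Lemma Lp_eval z : Lp.[z] = \sum_(j < M.+1) alj yy j * z ^+ (Q ^ j).
Proof. by rewrite /Lp horner_sum; apply: eq_bigr => j _; rewrite hornerZ hornerXn. Qed.

Lemma Lp_add x z : Lp.[x + z] = Lp.[x] + Lp.[z].
Proof. by rewrite !Lp_eval -big_split; apply: eq_bigr => j _; rewrite (frobD emb) mulrDr. Qed.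

Lemma Lp_0 : Lp.[0] = 0.
Proof.
by rewrite Lp_eval big1 // => j _; rewrite expr0n expn_eq0 (gtn_eqF (ltnW (Q_gt1 Fq))) /= mulr0.
Qed.

Lemma Lp_embM c z : Lp.[emb c * z] = emb c * Lp.[z].
Proof.
rewrite !Lp_eval mulr_sumr; apply: eq_bigr => j _.
by rewrite exprMn frob_emb mulrCA.
Qed.

Lemma Lp_Tk k : (k <= M)%N -> Lp.[T ^+ k] = (k == M)%:R.
Proof.
move=> kM; rewrite Lp_eval -(moment yy_inj kM); apply: eq_bigr => j _.
by rewrite mulrC /yy /yT exprAC.
Qed.

Definition wv (v : 'rV[Fq]_M) : C := evA emb T (rVpoly v).

Lemma wv_sum v : wv v = \sum_(i < M) emb (v 0 i) * T ^+ i.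
Proof.
rewrite /wv (@evA_sum _ M); last exact: size_poly.
by apply: eq_bigr => i _; rewrite coef_rVpoly valK.
Qed.

Lemma Lp_wv v : Lp.[wv v] = 0.
Proof.
rewrite wv_sum (big_morph (fun x => Lp.[x]) (id1 := 0) (op1 := +%R) Lp_add Lp_0).
rewrite big1 // => i _.
by rewrite Lp_embM Lp_Tk ?(ltnW (ltn_ord i)) // (ltn_eqF (ltn_ord i)) mulr0.
Qed.

Lemma wvB v v' : wv (v - v') = wv v - wv v'.
Proof. by rewrite /wv /evA linearB /= rmorphB hornerD hornerN. Qed.

Lemma wvN v : wv (- v) = - wv v.
Proof. by rewrite -sub0r wvB /wv linear0 /evA rmorph0 horner0 sub0r. Qed.

Lemma wv_inj : injective wv.
Proof.
move=> v v' e; apply/eqP; rewrite -subr_eq0; apply/negPn/negP => ne.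
have : rVpoly (v - v') != 0.
  by apply: contra ne => /eqP h; rewrite -[v - v']rVpolyK h linear0.
by move/evA_neq0; rewrite -/(wv _) wvB e subrr eqxx.
Qed.


Lemma Lp_split : Lp = alj yy ord_max *: 'X^(Q ^ M) +
  \sum_(j < M) alj yy (widen_ord (leqnSn M) j) *: 'X^(Q ^ j).
Proof. by rewrite /Lp big_ord_recr /= addrC. Qed.

Lemma size_Lp_low : (size (\sum_(j < M) alj yy (widen_ord (leqnSn M) j) *: 'X^(Q ^ j) : {poly C})%R
   < (Q ^ M).+1)%N.
Proof.
rewrite ltnS; apply: leq_trans (size_sum _ _ _) _.
apply/bigmax_leqP => j _; apply: leq_trans (size_scale_leq _ _) _.
by rewrite size_polyXn ltn_exp2l ?Q_gt1.
Qed.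

Lemma alj_max_neq0 : alj yy ord_max != 0.
Proof. exact: alj_neq0 yy_inj _. Qed.

Lemma size_Lp : size Lp = (Q ^ M).+1.
Proof.
rewrite Lp_split size_polyDl; rewrite size_scale ?alj_max_neq0 ?size_polyXn //.
exact: size_Lp_low.
Qed.

Lemma lead_Lp : lead_coef Lp = alj yy ord_max.
Proof.
rewrite Lp_split lead_coefDl; first by rewrite lead_coefZ lead_coefXn mulr1.
by rewrite size_scale ?alj_max_neq0 ?size_polyXn //; exact: size_Lp_low.
Qed.

Lemma Lp_prod : Lp = alj yy ord_max *: \prod_(z <- map wv (enum 'rV[Fq]_M)) ('X - z%:P).
Proof.
set rs := map wv _.
have r1 : all (root Lp) rs by apply/allP => _ /mapP[v _ ->]; rewrite /root Lp_wv.
have r2 : uniq_roots rs by rewrite uniq_rootsE map_inj_uniq ?enum_uniq //; exact: wv_inj.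
have [qq eq] := @uniq_roots_prod_XsubC _ Lp rs r1 r2.
set P := \prod_(z <- rs) _ in eq.
have Pmon : P \is monic by apply: monic_prod_XsubC.
have sP : size P = (Q ^ M).+1.
  by rewrite size_prod_XsubC size_map -cardE card_mx mul1n.
have qq0 : qq != 0.
  by apply/negP => /eqP h; move: eq; rewrite h mul0r => /eqP; rewrite -size_poly_eq0 size_Lp.
have sq : size qq = 1%N.
  by have := size_Lp; rewrite eq (size_mul qq0 (monic_neq0 Pmon)) sP addnS /= => h; apply/eqP; rewrite -(eqn_add2r (Q ^ M)) h add1n.
have [c c0 qqc] := size_poly1P _ (introT eqP sq).
have hl := lead_Lp; rewrite eq lead_coefM (monicP Pmon) mulr1 qqc lead_coefC in hl; rewrite -hl.
by rewrite eq qqc mul_polyC.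
Qed.

Lemma alj_max : alj yy ord_max * \prod_(v : 'rV[Fq]_M) (T ^+ M - wv v) = 1.
Proof.
have := Lp_Tk (leqnn M); rewrite eqxx {1}Lp_prod hornerZ horner_prod big_map big_enum /=.
by under eq_bigr do rewrite hornerXsubC.
Qed.

Lemma Psi_eq z : Psi emb T M z = Lp.[z].
Proof.
have den : \prod_(v : 'rV[Fq]_M) evA emb T ('X^M + rVpoly v) = \prod_(v : 'rV[Fq]_M) (T ^+ M - wv v).
  rewrite (reindex_inj (@oppr_inj _)) /=; apply: eq_bigr => v _.
  have -> : evA emb T ('X^M + rVpoly (- v)) = T ^+ M + wv (- v).
    by rewrite /wv /evA rmorphD /= hornerD map_polyXn hornerXn.
  by rewrite wvN.
have Dn0 : \prod_(v : 'rV[Fq]_M) (T ^+ M - wv v) != 0.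
  by apply/negP => /eqP h; have := alj_max; rewrite h mulr0 => /eqP; rewrite eq_sym oner_eq0.
rewrite /Psi den Lp_prod hornerZ horner_prod big_map big_enum /=.
under [in RHS]eq_bigr do rewrite hornerXsubC.
rewrite mulrC; congr (_ * _).
by apply: (mulIf Dn0); rewrite mulVf // alj_max.
Qed.
End PsiM.

Lemma geo_fps (y : C) : y != 0 ->
  fps_mul (fun n => - (y^-1) ^+ n.+1) (fun n => ('X - y%:P)`_n) = fun n => (n == 0)%:R.
Proof.
move=> y0; apply: funext => -[|m].
  by rewrite /fps_mul big_ord1 /= subn0 coefB coefX coefC /= sub0r expr1 mulrNN mulVf.
have c0 : ('X - y%:P)`_0 = - y by rewrite coefB coefX coefC /= sub0r.
have c1 : ('X - y%:P)`_1 = 1 by rewrite coefB coefX coefC /= subr0.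
rewrite /fps_mul big_ord_recr big_ord_recr big1.
  rewrite /= subnn subSnn c0 c1 mulr1 add0r mulrNN [y^-1 ^+ m.+2]exprSr -mulrA mulVf // mulr1.
  by rewrite addNr.
move=> k _; rewrite coefB coefX coefC.
have h : (m.+1 - k)%N = (m - k).+1 by rewrite subSn // ltnW.
by rewrite h /= eqSS subn_eq0 leqNgt (ltn_ord k) /= subrr mulr0.
Qed.

Lemma Psi_fps M : fps_mul (fun n => - Psi emb T M (T ^- n.+1))
    (fun n => (\prod_(0 <= i < M.+1) ('X - (T ^+ (Q ^ i))%:P))`_n) = fun n => (n == 0)%:R.
Proof.
have e1 : (fun n => - Psi emb T M (T ^- n.+1)) =
    (fun n => \sum_(j < M.+1) alj (yy (M:=M)) j * (- ((yy j)^-1) ^+ n.+1)).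
  apply: funext => n; rewrite Psi_eq Lp_eval -sumrN; apply: eq_bigr => j _.
  by rewrite mulrN; congr (- (_ * _)); rewrite /yy /yT exprVn exprAC -exprVn.
rewrite e1 fps_mul_sumL big_mkord.
apply: funext => n.
have e2 : forall j : 'I_M.+1, fps_mul (fun n => - ((yy j)^-1) ^+ n.+1)
     (fun n => (\prod_(i < M.+1) ('X - (T ^+ (Q ^ i))%:P))`_n) = fun n => (Dj (yy (M:=M)) j)`_n.
  move=> j; rewrite (bigD1 j) //= -fps_mul_poly -fps_mulA.
  by rewrite (geo_fps (yT_neq0 _)) fps_mul_delta.
under eq_bigr do rewrite fps_mulZl e2.
have sp : (size (1%R : {poly C}) <= M.+1)%N by rewrite size_poly1.
have := congr1 (fun p : {poly C} => p`_n) (lagr_interp (yy_inj (M:=M)) sp).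
rewrite coef1 coef_sum => ->; apply: eq_bigr => j _.
by rewrite coefZ hornerC mul1r.
Qed.
End PsiSec.

Section Main.
Variables (R : realType) (C : fieldType) (Fq : finFieldType) (emb : {rmorphism Fq -> C}).
Variables (abs : C -> R) (T tT : C).
Hypothesis habs : complete_nonarch_abs abs.
Hypothesis hT : abs T = (q Fq)%:R.
Hypothesis htT : tT ^+ (q Fq).-1 = - T.
Variable Omega : nat -> C.
Hypothesis hOmega : is_Omega Fq abs T tT Omega.
Local Notation Q := (q Fq).
Local Notation c := (tT ^- Q).

Lemma conv_frob L s l : conv abs s l -> conv abs (fun m => s m ^+ (Q ^ L)) (l ^+ (Q ^ L)).
Proof.
move=> h e e0; have hm1 : 0 < Num.min e 1 by rewrite lt_min e0 ltr01.
have [M HM] := h (Num.min e 1) hm1.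
exists M => m hm; have := HM m hm; rewrite lt_min => /andP[h1 h2].
have -> : s m ^+ (Q ^ L) - l ^+ (Q ^ L) = (s m - l) ^+ (Q ^ L) by rewrite (frobD emb) (frobN emb).
rewrite (absX habs); apply: le_lt_trans h1.
have : (0 < Q ^ L)%N by rewrite expn_gt0 (ltnW (Q_gt1 Fq)).
case: (Q ^ L)%N => // k _; rewrite exprS; apply: ler_piMr; first exact: (abs_ge0 habs).
by apply: exprn_ile1; [exact: (abs_ge0 habs) | exact: ltW].
Qed.

Lemma Omega_twist L n : conv abs (fun m => (c ^+ (Q ^ L) *:
   \prod_(1 <= i < m.+1) (1 - (T ^+ (Q ^ (i + L)))^-1 *: 'X))`_n) (Omega n ^+ (Q ^ L)).
Proof.
apply: conv_ext (conv_frob L (hOmega n)) => m.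
rewrite -[_ ^+ (Q ^ L)]/(frobf emb L _) -coef_map map_polyZ rmorph_prod.
apply: (congr1 (fun p : {poly C} => p`_n)); congr (_ *: _); apply: eq_bigr => i _.
rewrite rmorphB rmorph1 /= map_polyZ map_polyX; congr (1 - _ *: _).
by rewrite /= /frobf exprVn -exprM -expnD.
Qed.

Lemma T_neq0' : T != 0. Proof. exact: T_neq0 habs hT. Qed.

Lemma cst L : c ^+ (Q ^ L) * \prod_(i < L) (- T ^+ (Q ^ i.+1)) = c.
Proof.
elim: L => [|L IH]; first by rewrite expn0 expr1 big_ord0 mulr1.
have fN := frobN emb 1; rewrite expn1 in fN.
have hp : \prod_(i < L) (- T ^+ (Q ^ i.+2)) = (\prod_(i < L) (- T ^+ (Q ^ i.+1))) ^+ Q.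
  rewrite -prodrXl; apply: eq_bigr => i _.
  by rewrite fN -exprM -expnSr.
rewrite big_ord_recl /= hp expnSr exprM mulrCA -exprMn IH.
have hc : c ^+ Q.-1 * (- T ^+ (Q ^ 1)) = 1.
  rewrite exprVn -exprM mulnC exprM htT fN expn1 mulVf //.
  by rewrite oppr_eq0 expf_neq0 // T_neq0'.
have -> : c ^+ Q = c * c ^+ Q.-1 by rewrite -exprS prednK // ltnW // Q_gt1.
by rewrite mulrCA [_ * c ^+ _]mulrC hc mulr1.
Qed.

Lemma conv_fps (f : nat -> C) (G : nat -> nat -> C) (H : nat -> C) n :
  (forall j, conv abs (fun m => G m j) (H j)) ->
  conv abs (fun m => fps_mul f (G m) n) (fps_mul f H n).
Proof.
move=> h.
have hh : forall k : 'I_n.+1, conv abs (fun m => f k * G m (n - k)%N) (f k * H (n - k)%N).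
  by move=> k; apply: (conv_scale habs); apply: h.
exact: (@conv_sum _ _ abs habs _ (index_enum 'I_n.+1) (fun k m => f k * G m (n - k)%N)
   (fun k => f k * H (n - k)%N) hh).
Qed.

End Main.

Lemma OneSubE (C : fieldType) (y : C) : y != 0 -> 1 - y^-1 *: 'X = (- y^-1) *: ('X - y%:P).
Proof.
move=> y0; rewrite scalerBr scaleNr scaleNr opprK scale_polyC mulVf //.
by rewrite addrC.
Qed.

Lemma XsubE (C : fieldType) (y : C) : y != 0 -> 'X - y%:P = (- y) *: (1 - y^-1 *: 'X).
Proof.
move=> y0; by rewrite OneSubE ?invr_eq0 // scalerA mulrNN mulfV // scale1r.
Qed.

Lemma fps_mul_coefZ (C : fieldType) (f : nat -> C) (a : C) (p : {poly C}) n :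
  fps_mul f (fun j => (a *: p)`_j) n = a * fps_mul f (fun j => p`_j) n.
Proof. by rewrite /fps_mul mulr_sumr; apply: eq_bigr => k _; rewrite coefZ mulrCA. Qed.

Section Main2.
Variables (R : realType) (C : fieldType) (Fq : finFieldType) (emb : {rmorphism Fq -> C}).
Variables (abs : C -> R) (T tT : C).
Hypothesis habs : complete_nonarch_abs abs.
Hypothesis hT : abs T = (q Fq)%:R.
Hypothesis htT : tT ^+ (q Fq).-1 = - T.
Variable Omega : nat -> C.
Hypothesis hOmega : is_Omega Fq abs T tT Omega.
Local Notation Q := (q Fq).
Local Notation c := (tT ^- Q).
Local Notation FF i := (1 - (T ^+ (Q ^ i))^-1 *: 'X).

Lemma yneq0 i : T ^+ (Q ^ i) != 0.
Proof. by rewrite expf_neq0 // (T_neq0 habs hT). Qed.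

Lemma neg_case M (OmegaN OmegaM1 r : nat -> C)
  (hN : forall i, OmegaN i ^+ (Q ^ M.+1) = Omega i)
  (hM1 : forall i, OmegaM1 i ^+ (Q ^ 1) = Omega i)
  (hr : forall i, r i ^+ (Q ^ i) = T) :
  OmegaN = fps_mul (fun n => (\prod_(1 <= i < M.+1) ('X - (r i)%:P))`_n) OmegaM1.
Proof.
apply: funext => n; apply: (frob_inj emb (L := M.+1)); rewrite hN.
rewrite -[_ ^+ (Q ^ M.+1)]/(frobf emb M.+1 _) fps_mul_rmorph.
set B := \prod_(1 <= i < M.+1) ('X - (T ^+ (Q ^ i))%:P).
have hB : (fun k => frobf emb M.+1 ((\prod_(1 <= i < M.+1) ('X - (r i)%:P))`_k)) = (fun k => B`_k).
  apply: funext => k; rewrite -coef_map rmorph_prod; apply: (congr1 (fun p : {poly C} => p`_k)).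
  rewrite /B [RHS]big_nat_rev /=; apply: eq_big_nat => i /andP[i1 iM].
  rewrite rmorphB /= map_polyX map_polyC /= /frobf.
  have -> : (1 + M.+1 - i.+1 = M.+1 - i)%N by lia.
  by rewrite -(subnKC (ltnW iM)) expnD exprM hr subnKC // ltnW.
have hO : (fun k => frobf emb M.+1 (OmegaM1 k)) = (fun k => Omega k ^+ (Q ^ M)).
  by apply: funext => k; rewrite /frobf expnS exprM -hM1 expn1.
rewrite hB hO.
set Kp := \prod_(1 <= i < M.+1) (- T ^+ (Q ^ i)).
have hBK : B = Kp *: \prod_(1 <= i < M.+1) FF i.
  by rewrite /B /Kp -scaler_prod; apply: eq_bigr => i _; rewrite XsubE ?yneq0.
have hK : c ^+ (Q ^ M) * Kp = c.
  by rewrite /Kp big_add1 /= big_mkord (cst emb habs hT htT M).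
have h1 := conv_fps habs (fun k => B`_k) n (Omega_twist emb habs hOmega M).
have h2 := conv_shift M (hOmega n).
apply: (conv_uniq habs h2); apply: conv_ext h1 => m.
set X := _ *: \prod_(1 <= i < m.+1) _.
rewrite (congr1 (fun f => f n) (fps_mul_poly B X)) /X -scalerAr hBK -scalerAl scalerA.
rewrite hK; apply: (congr1 (fun p : {poly C} => (c *: p)`_n)).
rewrite (@big_cat_nat _ _ _ M.+1 1 (m + M).+1) //; last by rewrite ltnS leq_addl.
congr (_ * _); rewrite -{1}[M.+1]/(1 + M)%N big_addn.
have -> : ((m + M).+1 - M = m.+1)%N by lia.
by [].
Qed.

Lemma pos_case M (OmegaN OmegaM1 : nat -> C)
  (hN : forall i, OmegaN i = Omega i ^+ (Q ^ M))
  (hM1 : forall i, OmegaM1 i ^+ (Q ^ 1) = Omega i) :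
  OmegaN = fps_mul (fun n => - Psi emb T M (T ^- n.+1)) OmegaM1.
Proof.
apply: funext => n; apply: (frob_inj emb (L := 1)); rewrite hN -exprM -expnD addn1.
rewrite -[_ ^+ (Q ^ 1)]/(frobf emb 1 _) fps_mul_rmorph.
set fa1 := fun k => frobf emb 1 (- Psi emb T M (T ^- k.+1)).
have hO : (fun k => frobf emb 1 (OmegaM1 k)) = Omega by apply: funext => k; apply: hM1.
rewrite hO.
set Dp := \prod_(i < M.+1) ('X - (T ^+ (Q ^ i.+1))%:P).
have F1 : fps_mul fa1 (fun j => Dp`_j) = fun j => (j == 0)%:R.
  apply: funext => j.
  have := congr1 (fun f => frobf emb 1 (f j)) (Psi_fps emb habs hT M).
  rewrite /= fps_mul_rmorph rmorph_nat => <-.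
  congr fps_mul; apply: funext => k; rewrite -coef_map rmorph_prod big_mkord.
  apply: (congr1 (fun p : {poly C} => p`_k)); apply: eq_bigr => i _.
  by rewrite rmorphB /= map_polyX map_polyC /= /frobf -exprM -expnD addn1.
set K1 := \prod_(i < M.+1) (- (T ^+ (Q ^ i.+1))^-1).
have hK : c * K1 = c ^+ (Q ^ M.+1).
  rewrite -{1}(cst emb habs hT htT M.+1) -mulrA -big_split /= big1 ?mulr1 // => i _.
  by rewrite mulrNN mulfV ?yneq0.
set s := fun m => (c ^+ (Q ^ M.+1) *: \prod_(M.+2 <= i < m.+1) FF i)`_n.
have h1 : conv abs s (Omega n ^+ (Q ^ M.+1)).
  apply: (conv_unshift (K := M.+1)); apply: conv_ext (Omega_twist emb habs hOmega M.+1 n) => m.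
  rewrite /s -[M.+2]/(1 + M.+1)%N big_addn.
  by have -> : ((m + M.+1).+1 - M.+1 = m.+1)%N by lia.
have h2 := conv_fps habs fa1 n (fun j => hOmega j).
apply: (conv_uniq habs h1); apply: (conv_ext_ev (K := M.+1)) h2 => m hm.
rewrite fps_mul_coefZ (@big_cat_nat _ _ _ M.+2 1 m.+1) //.
have -> : \prod_(1 <= i < M.+2) FF i = K1 *: Dp.
  rewrite big_add1 /= big_mkord /K1 /Dp -scaler_prod; apply: eq_bigr => i _.
  by rewrite OneSubE ?yneq0.
rewrite /= -scalerAl fps_mul_coefZ mulrA hK.
rewrite -(fps_mul_poly Dp) -fps_mulA F1 fps_mul_delta.
by rewrite /s coefZ.
Qed.

End Main2.

Theorem lemma5 (R : realType) (C : closedFieldType) (Fq : finFieldType)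
  (emb : {rmorphism Fq -> C}) (abs : C -> R) (T tT : C)
  (habs : complete_nonarch_abs abs)
  (hT : abs T = (q Fq)%:R)
  (hdense : kbar_dense emb abs T)
  (htT : tT ^+ (q Fq).-1 = - T)
  (Omega : nat -> C) (hOmega : is_Omega Fq abs T tT Omega)
  (N : int) (OmegaN OmegaM1 : nat -> C)
  (hN : twist Fq N Omega OmegaN) (hM1 : twist Fq (-1) Omega OmegaM1)
  (r : nat -> C) (hr : forall i : nat, r i ^+ (q Fq ^ i) = T) :
  ((0 <= N)%R ->
     OmegaN = fps_mul (fun n => - Psi emb T `|N|%N (T ^- n.+1)) OmegaM1) /\
  ((N < 0)%R ->
     OmegaN = fps_mul (fun n => (\prod_(1 <= i < `|N|%N) ('X - (r i)%:P))`_n) OmegaM1).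
Proof.
have hM1' : forall i, OmegaM1 i ^+ (q Fq ^ 1) = Omega i by exact: hM1.
split.
- case: N hN => [M|M] hN hN0 //.
  exact: (pos_case emb habs hT htT hOmega hN hM1').
- case: N hN => [M|M] hN hNn //.
  exact: (neg_case emb habs hT htT hOmega hN hM1' hr).
Qed.
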